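(* Let $f:(0,\infty)\to(0,\infty)$ be continuous with $f\in\mathrm{RV}_0(\beta)$ for some $\beta>1$, let $F(x)=\int_x^1\frac{du}{f(u)}$ and $F^{-1}$ its inverse. Let $\varphi:(0,\infty)\to(0,\infty)$ be continuous and strictly increasing with $\varphi(x)\to0$ as $x\to0^+$ and $\lim_{x\to0^+}f(x)/\varphi(x)=1$. Let $\theta>0$ and let $\gamma:(0,\infty)\to(0,\infty)$ be continuous, strictly decreasing, with $\gamma\in\mathrm{RV}_\infty(-\theta)$ and $\gamma(t)\to0$ as $t\to\infty$. If \[ \lim_{t\to\infty}\frac{f(F^{-1}(t))}{\gamma(t)}=0, \] then \[ \lim_{t\to\infty}\frac{\varphi^{-1}(\gamma(t))}{t\,\gamma(t)}=0. \]
   Context: $\mathrm{RV}_0(\beta)$: measurable positive $\varphi$ on $(0,\infty)$ with $\varphi(\lambda x)/\varphi(x)\to\lambda^\beta$ as $x\to0^+$ for every $\lambda>0$. $\mathrm{RV}_\infty(\alpha)$: measurable positive $h$ with $h(\lambda t)/h(t)\to\lambda^\alpha$ as $t\to\infty$ for every $\lambda>0$. *)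

(* Defs.v *)
From Stdlib Require Import Reals Lra.
Open Scope R_scope.

Definition lim_0plus (g : R -> R) (l : R) : Prop :=
  forall eps, 0 < eps -> exists d, 0 < d /\
    forall x, 0 < x < d -> Rabs (g x - l) < eps.

Definition lim_infty (g : R -> R) (l : R) : Prop :=
  forall eps, 0 < eps -> exists M, forall t, M < t -> Rabs (g t - l) < eps.

Definition RV0 (phi : R -> R) (beta : R) : Prop :=
  (forall x, 0 < x -> 0 < phi x) /\
  forall lam, 0 < lam -> lim_0plus (fun x => phi (lam * x) / phi x) (Rpower lam beta).

Definition RVinf (h : R -> R) (alpha : R) : Prop :=
  (forall t, 0 < t -> 0 < h t) /\
  forall lam, 0 < lam -> lim_infty (fun t => h (lam * t) / h t) (Rpower lam alpha).

Definition is_F (f F : R -> R) : Prop :=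
  forall x, 0 < x ->
    exists pr : Riemann_integrable (fun u => / f u) x 1, F x = RiemannInt pr.

(* Main.v *)
Require Import Defs.
From Stdlib Require Import Reals Lra ZArith.
From Coquelicot Require Import Coquelicot.
Open Scope R_scope.

Lemma nat_unbounded (x : R) : exists n : nat, x < INR n.
Proof.
  destruct (Rle_dec 0 x) as [Hx|Hx].
  - destruct (archimed x) as [H _].
    exists (Z.to_nat (up x)). rewrite INR_IZR_INZ, Z2Nat.id; [lra|].
    apply le_IZR. lra.
  - exists 0%nat. simpl. lra.
Qed.

Lemma ivt_incr (G : R -> R) (a b v : R) :
  (forall u, a <= u <= b -> continuity_pt G u) -> a < b -> G a < v -> v < G b ->
  exists z, a <= z <= b /\ G z = v.
Proof.
  intros Hc Hab Ha Hb.
  destruct (Ranalysis5.IVT_interv (fun u => G u - v) a b) as [z [Hz1 Hz2]]; auto; try lra.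
  intros u Hu. apply (continuity_pt_minus G (fun _ => v)); auto.
  apply continuity_pt_const. intros p q; reflexivity.
  exists z. split; auto. lra.
Qed.

Lemma half_pow (k : nat) : 0 < (/2)^k <= 1.
Proof. induction k; simpl; lra. Qed.

Lemma Rpow_half (beta : R) : 1 < beta -> 0 < Rpower (/2) beta < /2.
Proof.
  intros Hb. unfold Rpower. split. apply exp_pos.
  assert (Hl : ln (/2) < 0). { rewrite <- ln_1. apply ln_increasing; lra. }
  rewrite <- (exp_ln (/2)) at 2 by lra. apply exp_increasing. nra.
Qed.

Theorem mainTheorem11
  (f F Finv phi phiinv gamma : R -> R) (beta theta : R)
  (hfpos : forall x, 0 < x -> 0 < f x)
  (hfcont : forall x, 0 < x -> continuity_pt f x)
  (hbeta : 1 < beta)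
  (hfRV : RV0 f beta)
  (hF : is_F f F)
  (hFinv : forall x, 0 < x -> Finv (F x) = x)
  (hphipos : forall x, 0 < x -> 0 < phi x)
  (hphicont : forall x, 0 < x -> continuity_pt phi x)
  (hphiinc : forall x y, 0 < x -> x < y -> phi x < phi y)
  (hphi0 : lim_0plus phi 0)
  (hphiinv : forall x, 0 < x -> phiinv (phi x) = x)
  (hfphi : lim_0plus (fun x => f x / phi x) 1)
  (htheta : 0 < theta)
  (hgpos : forall t, 0 < t -> 0 < gamma t)
  (hgcont : forall t, 0 < t -> continuity_pt gamma t)
  (hgdec : forall s t, 0 < s -> s < t -> gamma t < gamma s)
  (hgRV : RVinf gamma (- theta))
  (hg0 : lim_infty gamma 0)
  (hlim : lim_infty (fun t => f (Finv t) / gamma t) 0) :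
  lim_infty (fun t => phiinv (gamma t) / (t * gamma t)) 0.
Proof.
  set (g := fun u => / f u).
  set (Fr := fun a => RInt g a 1).
  assert (exg1 : forall a, 0 < a -> ex_RInt g a 1).
  { intros a Ha. destruct (hF a Ha) as [pr _]. now apply ex_RInt_Reals_1. }
  assert (exg : forall a b, 0 < a -> a <= b -> b <= 1 -> ex_RInt g a b).
  { intros a b Ha Hab Hb. apply (ex_RInt_Chasles_1 g a b 1); auto. }
  assert (Feq : forall x, 0 < x -> F x = Fr x).
  { intros x Hx. destruct (hF x Hx) as [pr Hpr]. rewrite Hpr. unfold Fr.
    symmetry. apply RInt_Reals. }
  assert (gpos : forall u, 0 < u -> 0 < g u).
  { intros u Hu. unfold g. apply Rinv_0_lt_compat. auto. }
  assert (Frcont : forall x, 0 < x -> continuity_pt Fr x).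
  { intros x Hx. apply continuity_pt_filterlim.
    apply (ex_derive_continuous Fr x).
    eexists. apply (is_derive_RInt' g Fr x 1).
    - exists (mkposreal (x/2) ltac:(lra)). intros y Hy.
      change (Rabs (y - x) < x/2) in Hy. apply Rabs_def2 in Hy.
      unfold Fr. apply (RInt_correct g). apply exg1. lra.
    - apply continuity_pt_filterlim. unfold g.
      apply (continuity_pt_inv f x); auto. specialize (hfpos x Hx). lra. }
  assert (Chas : forall a b, 0 < a -> a <= b -> b <= 1 -> Fr a = RInt g a b + Fr b).
  { intros a b Ha Hab Hb. unfold Fr. symmetry.
    apply (RInt_Chasles g a b 1); auto. apply exg; lra. }
  assert (intpos : forall a b, 0 < a -> a <= b -> b <= 1 -> 0 <= RInt g a b).
  { intros a b Ha Hab Hb. apply RInt_ge_0; auto. intros u Hu. left. apply gpos. lra. }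
  assert (LFrge : forall a b, 0 < a -> a <= b -> b <= 1 -> RInt g a b <= Fr a).
  { intros a b Ha Hab Hb. rewrite (Chas a b); auto. assert (0 <= Fr b).
    { apply intpos; lra. } lra. }
  assert (FrMono : forall a b, 0 < a -> a <= b -> b <= 1 -> Fr b <= Fr a).
  { intros a b Ha Hab Hb. rewrite (Chas a b); auto. assert (0 <= RInt g a b).
    { apply intpos; lra. } lra. }
  assert (Fr1 : Fr 1 = 0). { unfold Fr. exact (RInt_point 1 g). }
  destruct (hfphi (/2) ltac:(lra)) as [d1 [Hd1 H1]].
  assert (B1 : forall u, 0 < u < d1 -> f u < 3/2 * phi u /\ phi u / 2 < f u).
  { intros u Hu. specialize (H1 u Hu). apply Rabs_lt_between' in H1.
    assert (Hp := hphipos u ltac:(lra)).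
    assert (E : f u = (f u / phi u) * phi u) by (field; lra).
    rewrite E. nra. }
  destruct (Rpow_half beta hbeta) as [Hr0 Hr1].
  set (r := Rpower (/2) beta) in *.
  destruct hfRV as [_ hRV].
  destruct (hRV (/2) ltac:(lra) (Rmin (r/2) (/2 - r))) as [d2 [Hd2 H2]].
  { apply Rmin_pos; lra. }
  assert (B2 : forall z, 0 < z < d2 -> f (/2 * z) < /2 * f z /\ r/2 * f z < f (/2 * z)).
  { intros z Hz. specialize (H2 z Hz). change (Rpower (/2) beta) with r in H2. apply Rabs_lt_between' in H2.
    assert (Hm1 := Rmin_l (r/2) (/2 - r)). assert (Hm2 := Rmin_r (r/2) (/2 - r)).
    assert (Hp := hfpos z ltac:(lra)).
    assert (E : f (/2 * z) = (f (/2 * z) / f z) * f z) by (field; lra).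
    rewrite E. set (q := f (/2 * z) / f z) in *.
    assert (q < /2) by lra. assert (r/2 < q) by lra. split; nra. }
  set (z0 := Rmin 1 (Rmin d1 d2)).
  assert (Hz0 : 0 < z0 /\ z0 <= 1 /\ z0 <= d1 /\ z0 <= d2).
  { unfold z0. repeat split.
    - repeat apply Rmin_pos; lra.
    - apply Rmin_l.
    - eapply Rle_trans. apply Rmin_r. apply Rmin_l.
    - eapply Rle_trans. apply Rmin_r. apply Rmin_r. }
  destruct Hz0 as [Hz0p [Hz01 [Hz0d1 Hz0d2]]].
  assert (Iter : forall y, 0 < y < z0 -> forall k,
    f ((/2)^k * y) <= (/2)^k * f y /\ (r/2)^k * f y <= f ((/2)^k * y)).
  { intros y Hy k. induction k as [|k IH].
    - simpl. rewrite !Rmult_1_l. lra.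
    - destruct (half_pow k) as [Hk1 Hk2].
      assert (Hp : 0 < (/2)^k * y < d2) by (split; nra).
      destruct (B2 _ Hp) as [Ha Hb].
      assert (Hf := hfpos y ltac:(lra)).
      assert (Hrk : 0 < (r/2)^k) by (apply pow_lt; lra).
      simpl. rewrite !Rmult_assoc. split; nra. }
  assert (Lint : forall z, 0 < z < z0 -> (/2 * z) * / (3 * f z) <= RInt g (/2 * z) z).
  { intros z Hz.
    assert (Hfz := hfpos z ltac:(lra)).
    assert (E : (/2 * z) * / (3 * f z) = RInt (fun _ => / (3 * f z)) (/2 * z) z).
    { rewrite RInt_const. transitivity ((z - /2*z) * / (3 * f z)); [field; lra| reflexivity]. }
    rewrite E. apply RInt_le. lra. apply ex_RInt_const. apply exg; lra.
    intros u Hu. unfold g. assert (Hfu := hfpos u ltac:(lra)).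
    apply Rinv_le_contravar; auto.
    destruct (B1 u ltac:(lra)) as [Hu1 _]. destruct (B1 z ltac:(lra)) as [_ Hz2].
    assert (phi u < phi z) by (apply hphiinc; lra). lra. }
  assert (Lsum : forall y, 0 < y < z0 -> forall K : nat,
    INR K * (y / (6 * f y)) <= RInt g ((/2)^K * y) y).
  { intros y Hy K. induction K as [|K IH].
    - simpl. rewrite Rmult_1_l. assert (E0 : RInt g y y = 0) by exact (RInt_point y g). rewrite E0. lra.
    - destruct (half_pow K) as [Hk1 Hk2].
      assert (Hp : 0 < (/2)^K * y < z0) by (split; nra).
      assert (Hf := hfpos y ltac:(lra)).
      assert (Hfp := hfpos ((/2)^K * y) ltac:(lra)).
      destruct (Iter y Hy K) as [Hi _].
      assert (HL := Lint _ Hp).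
      assert (E : RInt g ((/2)^(S K) * y) y = RInt g (/2 * ((/2)^K * y)) ((/2)^K * y) + RInt g ((/2)^K * y) y).
      { simpl. rewrite Rmult_assoc. symmetry. apply (RInt_Chasles g); apply exg; nra. }
      rewrite E, S_INR.
      assert (y / (6 * f y) <= / 2 * ((/ 2) ^ K * y) * / (3 * f ((/ 2) ^ K * y))).
      { assert (/ (3 * ((/2)^K * f y)) <= / (3 * f ((/ 2) ^ K * y))).
        { apply Rinv_le_contravar; nra. }
        assert (E2 : y / (6 * f y) = / 2 * ((/ 2) ^ K * y) * / (3 * ((/2)^K * f y))) by (field; lra).
        rewrite E2. apply Rmult_le_compat_l; nra. }
      lra. }
  intros eps Heps.
  destruct (nat_unbounded (9 / eps)) as [K HK].
  assert (HKpos : 0 < INR K) by (assert (0 < 9/eps) by (apply Rdiv_lt_0_compat; lra); lra).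
  assert (HrK : 0 < (r/2)^K) by (apply pow_lt; lra).
  set (eta := (r/2)^K / 6).
  assert (Heta : 0 < eta) by (unfold eta; lra).
  assert (Hphz := hphipos (z0/2) ltac:(lra)).
  destruct (hg0 (phi (z0/2)) Hphz) as [M1 HM1].
  destruct (hlim eta Heta) as [M2 HM2].
  exists (Rmax (Rmax M1 M2) (Rmax (Fr z0) 0)).
  intros t Ht.
  assert (Ht1 : M1 < t /\ M2 < t /\ Fr z0 < t /\ 0 < t).
  { assert (H1' := Rmax_l M1 M2). assert (H2' := Rmax_r M1 M2).
    assert (H3' := Rmax_l (Fr z0) 0). assert (H4' := Rmax_r (Fr z0) 0).
    assert (H5' := Rmax_l (Rmax M1 M2) (Rmax (Fr z0) 0)).
    assert (H6' := Rmax_r (Rmax M1 M2) (Rmax (Fr z0) 0)). lra. }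
  destruct Ht1 as [HtM1 [HtM2 [HtF Ht0]]].
  assert (Hgt := hgpos t Ht0).
  assert (Hgt1 : gamma t < phi (z0/2)).
  { specialize (HM1 t HtM1). apply Rabs_def2 in HM1. lra. }
  assert (Hgt2 : f (Finv t) / gamma t < eta).
  { specialize (HM2 t HtM2). apply Rabs_def2 in HM2. lra. }
  destruct (hphi0 (gamma t) Hgt) as [d3 [Hd3 H3]].
  set (a := Rmin (d3/2) (z0/4)).
  assert (Ha : 0 < a /\ a < d3 /\ a < z0/2).
  { unfold a. assert (Hm1 := Rmin_l (d3/2) (z0/4)). assert (Hm2 := Rmin_r (d3/2) (z0/4)).
    split. apply Rmin_pos; lra. lra. }
  assert (Hpa : phi a < gamma t).
  { specialize (H3 a ltac:(lra)). apply Rabs_def2 in H3. lra. }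
  destruct (ivt_incr phi a (z0/2) (gamma t)) as [y [Hy Hphy]]; try lra.
  { intros u Hu. apply hphicont. lra. }
  assert (Hy0 : 0 < y < z0) by lra.
  assert (Hfz := hfpos (z0/2) ltac:(lra)).
  destruct (nat_unbounded (t / ((z0/2) / (6 * f (z0/2))))) as [j Hj].
  assert (HC : 0 < (z0/2) / (6 * f (z0/2))) by (apply Rdiv_lt_0_compat; lra).
  destruct (half_pow j) as [Hj1 Hj2].
  set (a' := (/2)^j * (z0/2)).
  assert (Ha' : 0 < a' <= z0/2) by (unfold a'; split; nra).
  assert (HFa' : t < Fr a').
  { assert (L := Lsum (z0/2) ltac:(lra) j).
    assert (L2 := LFrge a' (z0/2) ltac:(lra) ltac:(lra) ltac:(lra)).
    assert (t < INR j * ((z0/2) / (6 * f (z0/2)))).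
    { apply (Rmult_lt_compat_r ((z0/2) / (6 * f (z0/2)))) in Hj; auto.
      unfold Rdiv at 1 in Hj. rewrite Rmult_assoc, Rinv_l, Rmult_1_r in Hj; lra. }
    unfold a' in *. lra. }
  destruct (ivt_incr (fun u => - Fr u) a' 1 (- t)) as [x [Hx Hfx]]; try lra.
  { intros u Hu. apply (continuity_pt_opp Fr). apply Frcont. lra. }
  assert (Hx0 : 0 < x) by lra.
  assert (HFx : F x = t) by (rewrite Feq; lra).
  assert (HFinv : Finv t = x) by (rewrite <- HFx; auto).
  rewrite HFinv in Hgt2.
  assert (Hxz : x < z0).
  { destruct (Rlt_le_dec x z0) as [h|h]; auto.
    assert (Fr x <= Fr z0) by (apply FrMono; lra). lra. }
  destruct (half_pow K) as [HK1 HK2].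
  set (pK := (/2)^K * y).
  assert (HpK : 0 < pK <= y) by (unfold pK; split; nra).
  assert (Hfy := hfpos y ltac:(lra)).
  assert (HxpK : x <= pK).
  { destruct (Rle_lt_dec x pK) as [h|h]; auto. exfalso.
    assert (phi pK < phi x) by (apply hphiinc; lra).
    destruct (B1 x ltac:(lra)) as [_ Bx].
    destruct (B1 pK ltac:(lra)) as [BpK _].
    destruct (B1 y ltac:(lra)) as [_ By].
    destruct (Iter y Hy0 K) as [_ IK]. fold pK in IK.
    assert (eta * gamma t < f x).
    { unfold eta. rewrite <- Hphy. nra. }
    apply (Rmult_lt_compat_r (gamma t)) in Hgt2; auto.
    unfold Rdiv in Hgt2. rewrite Rmult_assoc, Rinv_l, Rmult_1_r in Hgt2; lra. }
  assert (Hsum := Lsum y Hy0 K). fold pK in Hsum.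
  assert (HFrx : RInt g pK y <= Fr x).
  { assert (Fr pK <= Fr x) by (apply FrMono; lra).
    assert (RInt g pK y <= Fr pK) by (apply LFrge; lra). lra. }
  destruct (B1 y ltac:(lra)) as [By _].
  rewrite <- Hphy, hphiinv by lra. rewrite Hphy.
  rewrite Rminus_0_r, Rabs_pos_eq.
  2:{ apply Rmult_le_pos. lra. left. apply Rinv_0_lt_compat. nra. }
  assert (HT : INR K * y / 9 <= t * gamma t).
  { assert (INR K * (y / (6 * f y)) <= t) by lra.
    assert (INR K * y / 9 <= INR K * (y / (6 * f y)) * gamma t).
    { assert (E : INR K * (y / (6 * f y)) * gamma t = INR K * y * (gamma t / (6 * f y))) by (field; lra).
      rewrite E. unfold Rdiv. apply Rmult_le_compat_l. nra.
      apply (Rmult_le_reg_l (6 * f y)). lra.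
      replace (6 * f y * (gamma t * / (6 * f y))) with (gamma t) by (field; lra). lra. }
    nra. }
  assert (HKe : 9 < INR K * eps).
  { apply (Rmult_lt_compat_r eps) in HK; auto. unfold Rdiv in HK.
    rewrite Rmult_assoc, Rinv_l, Rmult_1_r in HK; lra. }
  apply (Rmult_lt_reg_r (t * gamma t)). nra.
  unfold Rdiv. rewrite Rmult_assoc, Rinv_l, Rmult_1_r by nra. nra.
Qed.
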